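(* Let $(X,d)$ be a Hadamard space, $\mathbf a$ a mask with associated barycentric scheme $S$, and $x\in\ell^\infty(\mathbb Z^s,X)$. Then for all $n\in\mathbb N_0$, $i\in\mathbb Z^s$ and $z\in X$, $$d\big((S^nx)_i,z\big)\le\sum_{k\in\mathbb Z^s}a^{(n)}_{i-2^nk}\,d(x_k,z),$$ and consequently for all $i,j\in\mathbb Z^s$, $d\big((S^nx)_i,(S^nx)_j\big)\le\sum_{k,\ell\in\mathbb Z^s}a^{(n)}_{i-2^nk}a^{(n)}_{j-2^n\ell}\,d(x_k,x_\ell)$.
   Context: Hadamard space: complete metric space $(X,d)$ such that for any $x_0,x_1\in X$ there is $y$ with $d(z,y)^2\le\frac12d(z,x_0)^2+\frac12d(z,x_1)^2-\frac14d(x_0,x_1)^2$ for all $z$. Mask: finitely supported nonnegative $(a_i)_{i\in\mathbb Z^s}$ with $\sum_j a_{i-2j}=1$ for all $i$. Barycentric scheme: $Sx_i=\operatorname{argmin}_{y\in X}\sum_j a_{i-2j}d^2(x_j,y)$. The sequences $a^{(n)}$ are defined by $a^{(0)}_i=\delta_{i,0}$, $a^{(n+1)}_i=\sum_ja_{i-2j}a^{(n)}_j$. *)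

(* Defs.v *)
From Stdlib Require Import Reals Lra Lia ZArith List Classical ClassicalEpsilon.
From Stdlib Require Fin.
Open Scope R_scope.

Definition is_metric {X : Type} (d : X -> X -> R) : Prop :=
  (forall x y, 0 <= d x y) /\
  (forall x y, d x y = 0 <-> x = y) /\
  (forall x y, d x y = d y x) /\
  (forall x y z, d x z <= d x y + d y z).

Definition cauchy_seq {X : Type} (d : X -> X -> R) (u : nat -> X) : Prop :=
  forall eps, 0 < eps -> exists N, forall m n, (N <= m)%nat -> (N <= n)%nat ->
    d (u m) (u n) < eps.

Definition converges_to {X : Type} (d : X -> X -> R) (u : nat -> X) (l : X) : Prop :=
  forall eps, 0 < eps -> exists N, forall n, (N <= n)%nat -> d (u n) l < eps.

Definition complete {X : Type} (d : X -> X -> R) : Prop :=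
  forall u : nat -> X, cauchy_seq d u -> exists l, converges_to d u l.

Definition hadamard {X : Type} (d : X -> X -> R) : Prop :=
  is_metric d /\ complete d /\
  forall x0 x1 : X, exists y : X, forall z : X,
    (d z y)^2 <= /2 * (d z x0)^2 + /2 * (d z x1)^2 - /4 * (d x0 x1)^2.

Definition Zs (s : nat) : Type := Fin.t s -> Z.
Definition zs_sub {s} (i j : Zs s) : Zs s := fun t => (i t - j t)%Z.
Definition zs_scal {s} (c : Z) (j : Zs s) : Zs s := fun t => (c * j t)%Z.
Definition zs_zero {s} : Zs s := fun _ => 0%Z.

(** Sum over Z^s of a finitely supported real function: the sum over any
    duplicate-free list containing the support (well defined); 0 if the
    function is not finitely supported (never used in that case). *)
Definition zsum {s} (f : Zs s -> R) : R :=
  match excluded_middle_informative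
          (exists L : list (Zs s), NoDup L /\ forall k, f k <> 0 -> In k L) with
  | left H => fold_right Rplus 0 (map f (proj1_sig (constructive_indefinite_description _ H)))
  | right _ => 0
  end.

Definition is_mask {s} (a : Zs s -> R) : Prop :=
  (exists L : list (Zs s), forall k, a k <> 0 -> In k L) /\
  (forall k, 0 <= a k) /\
  (forall i, zsum (fun j => a (zs_sub i (zs_scal 2%Z j))) = 1).

(** Barycentric scheme: (S x)_i = argmin_y sum_j a_{i-2j} d(x_j,y)^2
    (a minimizer chosen by Hilbert's epsilon; it exists and is unique in a
    Hadamard space). *)
Definition bary_scheme {X : Type} (d : X -> X -> R) {s} (a : Zs s -> R)
    (x : Zs s -> X) : Zs s -> X :=
  fun i => epsilon (inhabits (x i))
    (fun y => forall y', zsum (fun j => a (zs_sub i (zs_scal 2%Z j)) * (d (x j) y)^2)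
                       <= zsum (fun j => a (zs_sub i (zs_scal 2%Z j)) * (d (x j) y')^2)).

Fixpoint mask_pow {s} (a : Zs s -> R) (n : nat) : Zs s -> R :=
  match n with
  | O => fun i => if excluded_middle_informative (i = zs_zero) then 1 else 0
  | S m => fun i => zsum (fun j => a (zs_sub i (zs_scal 2%Z j)) * mask_pow a m j)
  end.

Definition bounded_seq {X : Type} (d : X -> X -> R) {s} (x : Zs s -> X) : Prop :=
  exists M, forall k l, d (x k) (x l) <= M.

(* Main.v *)
Require Import Defs.
From Stdlib Require Import Reals Lra Lia ZArith List Classical ClassicalEpsilon FunctionalExtensionality Permutation Psatz.
Open Scope R_scope.

Definition sl {A} (f : A -> R) (L : list A) : R := fold_right Rplus 0 (map f L).

Lemma sl_nil {A} (f : A -> R) : sl f nil = 0. Proof. reflexivity. Qed.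
Lemma sl_cons {A} (f : A -> R) a L : sl f (a :: L) = f a + sl f L. Proof. reflexivity. Qed.

Lemma sl_add {A} (f g : A -> R) L : sl (fun k => f k + g k) L = sl f L + sl g L.
Proof. induction L; unfold sl in *; simpl. lra. rewrite IHL; lra. Qed.
Lemma sl_scal {A} (c : R) (f : A -> R) L : sl (fun k => c * f k) L = c * sl f L.
Proof. induction L; unfold sl in *; simpl. lra. rewrite IHL; lra. Qed.
Lemma sl_le {A} (f g : A -> R) L : (forall k, f k <= g k) -> sl f L <= sl g L.
Proof. intro H; induction L; unfold sl in *; simpl. lra. specialize (H a); lra. Qed.
Lemma sl_zero {A} (f : A -> R) L : (forall k, In k L -> f k = 0) -> sl f L = 0.
Proof. intro H; induction L; unfold sl in *; simpl. lra.
  rewrite H by (left; auto). rewrite IHL; [lra|]. intros; apply H; right; auto. Qed.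
Lemma sl_ext {A} (f g : A -> R) L : (forall k, f k = g k) -> sl f L = sl g L.
Proof. intro H; induction L; unfold sl in *; simpl. lra. rewrite H, IHL; lra. Qed.
Lemma sl_perm {A} (f : A -> R) L L' : Permutation L L' -> sl f L = sl f L'.
Proof. induction 1; unfold sl in *; simpl; lra. Qed.
Lemma sl_map {A B} (f : B -> R) (g : A -> B) L : sl f (map g L) = sl (fun k => f (g k)) L.
Proof. unfold sl; rewrite map_map; reflexivity. Qed.
Lemma sl_swap {A B} (G : A -> B -> R) La Lb :
  sl (fun j => sl (fun k => G j k) Lb) La = sl (fun k => sl (fun j => G j k) La) Lb.
Proof. induction La.
  - rewrite sl_nil; symmetry; apply sl_zero; auto.
  - rewrite sl_cons, IHLa. rewrite <- sl_add. apply sl_ext; intro; rewrite sl_cons; auto. Qed.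

Definition nzb (r : R) : bool := if Req_EM_T r 0 then false else true.

Lemma sl_filter {A} (f : A -> R) L : sl f L = sl f (filter (fun k => nzb (f k)) L).
Proof. induction L; simpl; auto. unfold nzb at 1; destruct (Req_EM_T (f a) 0).
  - rewrite sl_cons, e, IHL; lra.
  - rewrite !sl_cons, IHL; auto. Qed.

Lemma sl_nodup_eq {A} (f : A -> R) L1 L2 : NoDup L1 -> NoDup L2 ->
  (forall k, f k <> 0 -> In k L1) -> (forall k, f k <> 0 -> In k L2) -> sl f L1 = sl f L2.
Proof. intros N1 N2 H1 H2. rewrite (sl_filter f L1), (sl_filter f L2).
  apply sl_perm, NoDup_Permutation; try apply NoDup_filter; auto.
  intro k; rewrite !filter_In; unfold nzb; destruct (Req_EM_T (f k) 0); split; intros [_ Hb]; try discriminate; split; auto. Qed.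

Lemma zsum_list {s} (f : Zs s -> R) L : NoDup L -> (forall k, f k <> 0 -> In k L) -> zsum f = sl f L.
Proof. intros N H. unfold zsum. destruct excluded_middle_informative as [E|E].
  - destruct (constructive_indefinite_description _ E) as [L0 [N0 H0]]; simpl.
    apply (sl_nodup_eq f L0 L); auto.
  - exfalso; apply E; exists L; auto. Qed.

Definition deq {s} (x y : Zs s) : {x = y} + {x <> y} := excluded_middle_informative (x = y).
Definition nd {s} (L : list (Zs s)) := nodup deq L.

Lemma zsum_L {s} (f : Zs s -> R) L : (forall k, f k <> 0 -> In k L) -> zsum f = sl f (nd L).
Proof. intro H. apply zsum_list. apply NoDup_nodup. intros k Hk; apply nodup_In; auto. Qed.

Lemma sl_nonneg {A} (f : A -> R) L : (forall k, 0 <= f k) -> 0 <= sl f L.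
Proof. intro H; induction L; unfold sl in *; simpl. lra. specialize (H a); lra. Qed.

Lemma zsum_nonneg {s} (f : Zs s -> R) : (forall k, 0 <= f k) -> 0 <= zsum f.
Proof. intro H. unfold zsum. destruct excluded_middle_informative; [|lra].
  apply sl_nonneg; auto. Qed.

Lemma zsum_zero {s} (f : Zs s -> R) : (forall k, f k = 0) -> zsum f = 0.
Proof. intro H. rewrite (zsum_L f nil). reflexivity. intros k Hk; exfalso; auto. Qed.

Definition fs {s} (f : Zs s -> R) := exists L, forall k, f k <> 0 -> In k L.

Lemma zsum_le {s} (f g : Zs s -> R) L : (forall k, f k <> 0 -> In k L) -> (forall k, g k <> 0 -> In k L) ->
  (forall k, f k <= g k) -> zsum f <= zsum g.
Proof. intros; rewrite (zsum_L f L), (zsum_L g L); auto. apply sl_le; auto. Qed.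

Lemma zsum_ext {s} (f g : Zs s -> R) : (forall k, f k = g k) -> zsum f = zsum g.
Proof. intro H; replace g with f; auto. apply functional_extensionality; auto. Qed.

Lemma zsum_scal {s} (c : R) (g : Zs s -> R) : fs g -> c * zsum g = zsum (fun k => c * g k).
Proof. intros [L H]. rewrite (zsum_L g L), (zsum_L _ L); auto.
  - rewrite sl_scal; auto.
  - intros k Hk; apply H; intro E; rewrite E in Hk; apply Hk; ring. Qed.

Lemma zsum_fubini {s} (G : Zs s -> Zs s -> R) Lj Lk :
  (forall j k, G j k <> 0 -> In j Lj /\ In k Lk) ->
  zsum (fun j => zsum (fun k => G j k)) = zsum (fun k => zsum (fun j => G j k)).
Proof. intro H.
  rewrite (zsum_ext (fun j => zsum (fun k => G j k)) (fun j => sl (fun k => G j k) (nd Lk))).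
  2:{ intro j; apply zsum_L; intros k Hk; apply (H j k Hk). }
  rewrite (zsum_ext (fun k => zsum (fun j => G j k)) (fun k => sl (fun j => G j k) (nd Lj))).
  2:{ intro k; apply zsum_L; intros j Hj; apply (H j k Hj). }
  rewrite (zsum_L _ Lj), (zsum_L _ Lk). apply sl_swap.
  - intros k Hk. apply NNPP; intro Nk; apply Hk, sl_zero. intros j _. apply NNPP; intro E; apply Nk, (H j k E).
  - intros j Hj. apply NNPP; intro Nj; apply Hj, sl_zero. intros k _. apply NNPP; intro E; apply Nj, (H j k E).
Qed.

Lemma zsum_bij {s} (g : Zs s -> R) (tau sig : Zs s -> Zs s) :
  (forall j, sig (tau j) = j) -> (forall j, tau (sig j) = j) -> fs g ->
  zsum (fun j => g (tau j)) = zsum g.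
Proof. intros H1 H2 [L H]. rewrite (zsum_L g L) by auto.
  rewrite (zsum_list _ (map sig (nd L))).
  - rewrite sl_map. apply sl_ext; intro; rewrite H2; auto.
  - apply FinFun.Injective_map_NoDup. intros u v E. rewrite <- (H2 u), <- (H2 v), E; auto. apply NoDup_nodup.
  - intros k Hk. rewrite <- (H1 k). apply in_map. apply nodup_In; auto. Qed.

Lemma fs_pre {s} (f : Zs s -> R) (i : Zs s) (c : Z) : c <> 0%Z -> fs f ->
  fs (fun k => f (zs_sub i (zs_scal c k))).
Proof. intros Hc [L H]. exists (map (fun m => fun t => Z.div (i t - m t) c) L).
  intros k Hk. apply H in Hk.
  replace k with ((fun m : Zs s => fun t => Z.div (i t - m t) c) (zs_sub i (zs_scal c k))).
  exact (in_map (fun m : Zs s => fun t => Z.div (i t - m t) c) L _ Hk).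
  apply functional_extensionality; intro t. unfold zs_sub, zs_scal.
  replace (i t - (i t - c * k t))%Z with (k t * c)%Z by ring. apply Z.div_mul; auto. Qed.

Definition midP {X} (d : X -> X -> R) (F : X -> R) : Prop :=
  forall u v m, (forall z, d z m ^2 <= /2 * d z u ^2 + /2 * d z v ^2 - /4 * d u v ^2) ->
    F m <= /2 * F u + /2 * F v - /4 * d u v ^2.
Definition contP {X} (d : X -> X -> R) (F : X -> R) : Prop :=
  forall y l, F l <= F y + 2 * d y l * (1 + F y) + d y l ^2.

Lemma pow2_ge N : INR N + 1 <= 2 ^ N.
Proof. induction N. simpl; lra. rewrite S_INR; simpl. pose proof (pos_INR N). lra. Qed.

Lemma arch e : 0 < e -> exists N : nat, / (INR N + 1) < e.
Proof. intro He. destruct (archimed (/ e)) as [H1 _].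
  assert (Hp : (0 < up (/ e))%Z). { apply lt_IZR. pose proof (Rinv_0_lt_compat e He). simpl; lra. }
  exists (Z.to_nat (up (/ e))). rewrite INR_IZR_INZ, Z2Nat.id by lia.
  rewrite <- (Rinv_inv e) at 2. apply Rinv_lt_contravar.
  - apply Rmult_lt_0_compat. apply Rinv_0_lt_compat; lra. pose proof (Rinv_0_lt_compat e He); lra.
  - lra. Qed.

Lemma eps_le a b : (forall e, 0 < e -> a <= b + e) -> a <= b.
Proof. intro H. destruct (Rle_or_lt a b); auto. specialize (H ((a - b)/2)). lra. Qed.

Lemma var_ineq {X} (d : X -> X -> R) F b : hadamard d -> midP d F -> (forall y, F b <= F y) ->
  forall N z, (1 - / 2 ^ N) * d b z ^2 <= F z - F b.
Proof. intros [[Hpos [Hzero [Hsym Htri]]] [_ Hmid]] HM Hb N. induction N; intro z.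
  - simpl. specialize (Hb z). rewrite Rinv_1. lra.
  - destruct (Hmid b z) as [m Hm].
    assert (Hzz : d z z = 0) by (apply Hzero; auto).
    pose proof (Hm z) as Hmz. rewrite Hzz in Hmz. rewrite (Hsym z b) in Hmz.
    assert (Hzm : d z m <= d b z / 2).
    { pose proof (Hpos z m); pose proof (Hpos b z). nra. }
    assert (Hbm : d b z / 2 <= d b m). { pose proof (Htri b m z). rewrite (Hsym m z) in H. lra. }
    pose proof (IHN m) as IH. pose proof (HM b z m Hm) as HF.
    assert (Hq : 0 < / 2 ^ N <= 1).
    { split. apply Rinv_0_lt_compat, pow_lt; lra.
      rewrite <- Rinv_1. apply Rinv_le_contravar. lra. pose proof (pow2_ge N); pose proof (pos_INR N); lra. }
    replace (/ 2 ^ S N) with (/2 * / 2 ^ N) by (rewrite <- Rinv_mult; reflexivity).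
    pose proof (Hpos b z) as HD. set (q := / 2 ^ N) in *. set (D := d b z) in *.
    assert (D / 2 * (D / 2) <= d b m * d b m) by (apply Rmult_le_compat; lra).
    assert ((1 - q) * (D/2 * (D/2)) <= (1 - q) * (d b m * d b m)) by (apply Rmult_le_compat_l; lra).
    simpl in *. nra.
Qed.

Lemma exists_min {X} (d : X -> X -> R) F (x0 : X) : hadamard d -> (forall y, 0 <= F y) -> midP d F -> contP d F ->
  exists b, forall y, F b <= F y.
Proof.
  intros Hh Hnn HM HC. destruct Hh as [[Hpos [Hzero [Hsym Htri]]] [Hcomp Hmid]].
  set (E := fun r => exists y, r = - F y).
  destruct (completeness E) as [mm [Hub Hlub]].
  { exists 0. intros r [y ->]. specialize (Hnn y); lra. }
  { exists (- F x0). exists x0; auto. }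
  assert (Hmm : mm <= 0). { apply Hlub. intros r [y ->]. specialize (Hnn y); lra. }
  set (mu := - mm).
  assert (Hlow : forall y, mu <= F y).
  { intro y. assert (E (- F y)) by (exists y; auto). specialize (Hub _ H). unfold mu; lra. }
  assert (Happ : forall e, 0 < e -> exists y, F y < mu + e).
  { intros e He. apply NNPP; intro N. assert (is_upper_bound E (mm - e)).
    { intros r [y ->]. apply Rnot_lt_le; intro Hlt. apply N. exists y. unfold mu; lra. }
    specialize (Hlub _ H). lra. }
  assert (Hseq : forall n : nat, exists y, F y < mu + / (INR n + 1)).
  { intro n. apply Happ. apply Rinv_0_lt_compat. pose proof (pos_INR n); lra. }
  set (ys := fun n => proj1_sig (constructive_indefinite_description _ (Hseq n))).
  assert (Hys : forall n, F (ys n) < mu + / (INR n + 1)).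
  { intro n. unfold ys. destruct (constructive_indefinite_description _ (Hseq n)); auto. }
  assert (Hd2 : forall n k, d (ys n) (ys k) ^2 <= 2 * / (INR n + 1) + 2 * / (INR k + 1)).
  { intros n k. destruct (Hmid (ys n) (ys k)) as [m Hm]. pose proof (HM _ _ _ Hm).
    pose proof (Hlow m). pose proof (Hys n); pose proof (Hys k). lra. }
  assert (Hinv : forall n N, (N <= n)%nat -> / (INR n + 1) <= / (INR N + 1)).
  { intros n N Hn. apply Rinv_le_contravar. pose proof (pos_INR N); lra. apply le_INR in Hn; lra. }
  destruct (Hcomp ys) as [l Hl].
  { intros e He. destruct (arch (e*e/4)) as [N HN]. nra.
    exists N. intros n k Hn Hk. pose proof (Hd2 n k). pose proof (Hinv n N Hn); pose proof (Hinv k N Hk).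
    pose proof (Hpos (ys n) (ys k)). nra. }
  exists l. intro y. apply Rle_trans with mu; [|auto].
  apply eps_le. intros e He.
  assert (H4 : 0 < 6 + 2 * mu) by (unfold mu; lra). assert (Hmu0 : 0 <= mu) by (unfold mu; lra).
  set (del := Rmin 1 (e / (6 + 2*mu))).
  assert (Hdel : 0 < del /\ del <= 1 /\ del <= e / (6 + 2 * mu)).
  { unfold del; split; [apply Rmin_pos; [lra| apply Rdiv_lt_0_compat; lra]|split; [apply Rmin_l|apply Rmin_r]]. }
  destruct (arch del) as [N1 HN1]; [lra|].
  destruct (Hl del) as [N2 HN2]; [lra|].
  set (n := Nat.max N1 N2).
  pose proof (HN2 n (Nat.le_max_r _ _)) as Hdl.
  pose proof (Hys n) as Hyn. pose proof (Hinv n N1 (Nat.le_max_l _ _)).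
  pose proof (HC (ys n) l) as Hc.
  pose proof (Hpos (ys n) l). pose proof (Hlow (ys n)).
  set (e' := d (ys n) l) in *. set (Fy := F (ys n)) in *.
  assert (Fy <= mu + del) by lra.
  assert (2 * e' * (1 + Fy) <= 2 * del * (2 + mu)).
  { assert (1 + Fy <= 2 + mu) by lra. assert (0 <= 1 + Fy) by lra.
    apply Rmult_le_compat; lra. }
  assert (e' ^ 2 <= del) by nra.
  assert (del * (6 + 2 * mu) <= e).
  { destruct Hdel as [_ [_ Hd]]. apply Rmult_le_compat_r with (r := 6 + 2*mu) in Hd; [|lra].
    unfold Rdiv in Hd. rewrite Rmult_assoc, Rinv_l in Hd; lra. }
  nra.
Qed.

Lemma supp_mul {s} (w g : Zs s -> R) L : (forall j, w j <> 0 -> In j L) -> forall j, w j * g j <> 0 -> In j L.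
Proof. intros H j Hj. apply H. intro E; apply Hj; rewrite E; ring. Qed.




Lemma F_midP {X} (d : X -> X -> R) {s} (w : Zs s -> R) (p : Zs s -> X) Lw :
  (forall j, w j <> 0 -> In j Lw) -> (forall j, 0 <= w j) -> zsum w = 1 ->
  midP d (fun y => zsum (fun j => w j * d (p j) y ^2)).
Proof. intros HL Hw H1 u v m Hm. cbv beta.
  rewrite (zsum_L w Lw HL) in H1.
  rewrite !(zsum_L _ Lw) by (apply supp_mul; auto).
  replace (/ 2 * sl (fun j => w j * d (p j) u ^ 2) (nd Lw) + / 2 * sl (fun j => w j * d (p j) v ^ 2) (nd Lw) - / 4 * d u v ^ 2)
    with (sl (fun j => / 2 * (w j * d (p j) u ^ 2) + (/ 2 * (w j * d (p j) v ^ 2) + (- / 4 * d u v ^ 2) * w j)) (nd Lw)).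
  - apply sl_le. intro j. pose proof (Hm (p j)). pose proof (Hw j).
    assert (w j * d (p j) m ^ 2 <= w j * (/ 2 * d (p j) u ^ 2 + / 2 * d (p j) v ^ 2 - / 4 * d u v ^ 2))
      by (apply Rmult_le_compat_l; auto). lra.
  - rewrite !sl_add, !sl_scal, H1. ring.
Qed.

Lemma F_contP {X} (d : X -> X -> R) {s} (w : Zs s -> R) (p : Zs s -> X) Lw :
  is_metric d -> (forall j, w j <> 0 -> In j Lw) -> (forall j, 0 <= w j) -> zsum w = 1 ->
  contP d (fun y => zsum (fun j => w j * d (p j) y ^2)).
Proof. intros [Hpos [Hzero [Hsym Htri]]] HL Hw H1 y l. cbv beta.
  rewrite (zsum_L w Lw HL) in H1.
  rewrite !(zsum_L _ Lw) by (apply supp_mul; auto).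
  replace (sl (fun j => w j * d (p j) y ^ 2) (nd Lw) + 2 * d y l * (1 + sl (fun j => w j * d (p j) y ^ 2) (nd Lw)) + d y l ^ 2)
    with (sl (fun j => 1 * (w j * d (p j) y ^ 2) + ((2 * d y l) * w j + ((2 * d y l) * (w j * d (p j) y ^ 2) + d y l ^ 2 * w j))) (nd Lw)).
  - apply sl_le. intro j. pose proof (Hw j).
    pose proof (Htri (p j) y l). pose proof (Hpos (p j) y). pose proof (Hpos y l).
    pose proof (Hpos (p j) l).
    assert (d (p j) l ^2 <= (d (p j) y + d y l) ^ 2) by (apply pow_incr; lra).
    assert (d (p j) y <= 1 + d (p j) y ^ 2) by nra.
    assert (d y l * d (p j) y <= d y l * (1 + d (p j) y ^ 2)) by (apply Rmult_le_compat_l; lra).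
    assert (d (p j) l ^2 <= d (p j) y ^ 2 + 2 * d y l * (1 + d (p j) y ^ 2) + d y l ^ 2) by nra.
    assert (w j * d (p j) l ^2 <= w j * (d (p j) y ^ 2 + 2 * d y l * (1 + d (p j) y ^ 2) + d y l ^ 2))
      by (apply Rmult_le_compat_l; auto). lra.
  - rewrite !sl_add, !sl_scal, H1. ring.
Qed.

Lemma jensen_w {X} (d : X -> X -> R) {s} (w : Zs s -> R) (p : Zs s -> X) Lw :
  hadamard d -> (forall j, w j <> 0 -> In j Lw) -> (forall j, 0 <= w j) -> zsum w = 1 ->
  forall b, (forall y', zsum (fun j => w j * d (p j) b ^2) <= zsum (fun j => w j * d (p j) y' ^2)) ->
  forall z, d b z <= zsum (fun j => w j * d (p j) z).
Proof. intros Hh HL Hw H1 b Hb z.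
  pose proof (var_ineq d _ b Hh (F_midP d w p Lw HL Hw H1) Hb) as HV.
  destruct Hh as [[Hpos [Hzero [Hsym Htri]]] _].
  assert (HJ : zsum (fun j => w j * d (p j) z ^2) - zsum (fun j => w j * d (p j) b ^2)
     <= 2 * d b z * zsum (fun j => w j * d (p j) z) - d b z ^2).
  { rewrite (zsum_L w Lw HL) in H1.
    rewrite !(zsum_L _ Lw) by (apply supp_mul; auto).
    replace (2 * d b z * sl (fun j => w j * d (p j) z) (nd Lw) - d b z ^ 2)
      with (sl (fun j => (2 * d b z) * (w j * d (p j) z) + (- d b z ^ 2) * w j) (nd Lw))
      by (rewrite !sl_add, !sl_scal, H1; ring).
    apply Rplus_le_reg_r with (sl (fun j => w j * d (p j) b ^ 2) (nd Lw)).
    replace (sl (fun j => w j * d (p j) z ^ 2) (nd Lw) - sl (fun j => w j * d (p j) b ^ 2) (nd Lw) +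
      sl (fun j => w j * d (p j) b ^ 2) (nd Lw)) with (sl (fun j => w j * d (p j) z ^ 2) (nd Lw)) by ring.
    rewrite <- sl_add. apply sl_le. intro j. pose proof (Hw j).
    pose proof (Htri (p j) b z). pose proof (Htri b (p j) z). pose proof (Hsym b (p j)).
    pose proof (Hpos (p j) b). pose proof (Hpos b z). pose proof (Hpos (p j) z).
    set (r := d (p j) z) in *. set (rho := d (p j) b) in *. set (D := d b z) in *.
    assert ((r - D) ^2 <= rho ^ 2) by nra.
    assert (w j * ((r - D) ^2) <= w j * rho ^ 2) by (apply Rmult_le_compat_l; auto). nra. }
  set (G := zsum (fun j => w j * d (p j) z)) in *. set (D := d b z) in *.
  pose proof (Hpos b z). fold D in H.
  destruct (Rle_or_lt D G) as [|HDG]; auto. exfalso.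
  assert (HD : 0 < D) by (assert (0 <= G) by (apply zsum_nonneg; intro j; pose proof (Hw j); pose proof (Hpos (p j) z); nra); lra).
  destruct (arch (2 * (D - G) / D)) as [N HN]. { apply Rdiv_lt_0_compat; lra. }
  specialize (HV N z). fold D in HV.
  assert (Hq : / 2 ^ N <= / (INR N + 1)).
  { apply Rinv_le_contravar. pose proof (pos_INR N); lra. apply pow2_ge. }
  set (q := / 2 ^ N) in *.
  assert (q * D < 2 * (D - G)).
  { apply Rlt_le_trans with (2 * (D - G) / D * D). apply Rmult_lt_compat_r; lra.
    unfold Rdiv. rewrite Rmult_assoc, Rinv_l; lra. }
  assert ((2 - q) * D <= 2 * G).
  { apply Rmult_le_reg_r with D; auto. nra. }
  lra.
Qed.

Lemma bary_jensen {X} (d : X -> X -> R) {s} (a : Zs s -> R) (y : Zs s -> X) i z :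
  hadamard d -> is_mask a ->
  d (bary_scheme d a y i) z <= zsum (fun j => a (zs_sub i (zs_scal 2 j)) * d (y j) z).
Proof.
  intros Hh [Hfa [Hnn Hsum]].
  destruct (fs_pre a i 2 ltac:(lia) Hfa) as [Lw HL].
  unfold bary_scheme.
  apply (jensen_w d (fun j => a (zs_sub i (zs_scal 2 j))) y Lw Hh HL (fun j => Hnn _) (Hsum i)).
  apply epsilon_spec.
  apply (exists_min d _ (y i) Hh).
  - intro y0; apply zsum_nonneg; intro j. pose proof (Hnn (zs_sub i (zs_scal 2 j))).
    apply Rmult_le_pos; auto. apply pow2_ge_0.
  - apply F_midP with Lw; auto.
  - apply F_contP with Lw; auto. destruct Hh; auto.
Qed.

Definition pre_list {s} (L : list (Zs s)) (i : Zs s) (c : Z) : list (Zs s) :=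
  map (fun m => fun t => Z.div (i t - m t) c) L.

Lemma pre_list_ok {s} (f : Zs s -> R) L i c : c <> 0%Z -> (forall k, f k <> 0 -> In k L) ->
  forall k, f (zs_sub i (zs_scal c k)) <> 0 -> In k (pre_list L i c).
Proof. intros Hc H k Hk. apply H in Hk.
  replace k with ((fun m : Zs s => fun t => Z.div (i t - m t) c) (zs_sub i (zs_scal c k))).
  exact (in_map (fun m : Zs s => fun t => Z.div (i t - m t) c) L _ Hk).
  apply functional_extensionality; intro t. unfold zs_sub, zs_scal.
  replace (i t - (i t - c * k t))%Z with (k t * c)%Z by ring. apply Z.div_mul; auto. Qed.

Lemma supp_mul_r {s} (w g : Zs s -> R) L : (forall j, g j <> 0 -> In j L) -> forall j, w j * g j <> 0 -> In j L.
Proof. intros H j Hj. apply H. intro E; apply Hj; rewrite E; ring. Qed.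

Lemma mp_nonneg {s} (a : Zs s -> R) : (forall k, 0 <= a k) -> forall n k, 0 <= mask_pow a n k.
Proof. intros Ha n; induction n; intro k; simpl.
  - destruct excluded_middle_informative; lra.
  - apply zsum_nonneg; intro j. apply Rmult_le_pos; auto. Qed.

Lemma mp_fs {s} (a : Zs s -> R) La : (forall k, a k <> 0 -> In k La) ->
  forall n, exists Ln, forall k, mask_pow a n k <> 0 -> In k Ln.
Proof. intros HLa n; induction n.
  - exists (zs_zero :: nil). intros k Hk. simpl in Hk. destruct excluded_middle_informative; [left; auto| lra].
  - destruct IHn as [Ln HLn].
    exists (flat_map (fun j => map (fun k => fun t => (k t + 2 * j t)%Z) La) Ln).
    intros i Hi. apply NNPP; intro Nin. apply Hi. simpl. apply zsum_zero. intro j.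
    apply NNPP; intro Hne. apply Nin. apply in_flat_map. exists j. split.
    + apply HLn. intro E; apply Hne; rewrite E; ring.
    + assert (Hai : a (zs_sub i (zs_scal 2 j)) <> 0) by (intro E; apply Hne; rewrite E; ring).
      apply HLa in Hai.
      replace i with ((fun k : Zs s => fun t => (k t + 2 * j t)%Z) (zs_sub i (zs_scal 2 j))).
      exact (in_map (fun k : Zs s => fun t => (k t + 2 * j t)%Z) La _ Hai).
      apply functional_extensionality; intro t; unfold zs_sub, zs_scal; ring.
Qed.

Theorem mainTheorem3 (X : Type) (d : X -> X -> R) (s : nat) (a : Zs s -> R)
  (x : Zs s -> X) :
  hadamard d -> is_mask a -> bounded_seq d x ->
  forall n : nat,
    (forall (i : Zs s) (z : X),
       d (Nat.iter n (bary_scheme d a) x i) z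
       <= zsum (fun k => mask_pow a n (zs_sub i (zs_scal (2 ^ Z.of_nat n)%Z k)) * d (x k) z)) /\
    (forall i j : Zs s,
       d (Nat.iter n (bary_scheme d a) x i) (Nat.iter n (bary_scheme d a) x j)
       <= zsum (fun k => zsum (fun l =>
            mask_pow a n (zs_sub i (zs_scal (2 ^ Z.of_nat n)%Z k))
            * mask_pow a n (zs_sub j (zs_scal (2 ^ Z.of_nat n)%Z l))
            * d (x k) (x l)))).
Proof.
  intros Hh Ha _ n.
  pose proof Ha as [[La HLa] [Hnn Hsum]].
  pose proof Hh as [[Hpos [Hzero [Hsym Htri]]] _].
  assert (Hc : forall n, (2 ^ Z.of_nat n <> 0)%Z).
  { intro m. pose proof (Z.pow_pos_nonneg 2 (Z.of_nat m)). lia. }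
  assert (C1 : forall n i z, d (Nat.iter n (bary_scheme d a) x i) z
       <= zsum (fun k => mask_pow a n (zs_sub i (zs_scal (2 ^ Z.of_nat n)%Z k)) * d (x k) z)).
  { clear n. intro n; induction n; intros i z.
    - simpl Nat.iter. rewrite (zsum_list _ (i :: nil)).
      + rewrite sl_cons, sl_nil. simpl mask_pow.
        destruct excluded_middle_informative as [E|E]; [lra|].
        exfalso; apply E. apply functional_extensionality; intro t. unfold zs_sub, zs_scal, zs_zero. change (2 ^ Z.of_nat 0)%Z with 1%Z. lia.
      + constructor; [intros []|constructor].
      + intros k Hk. simpl in Hk. destruct excluded_middle_informative as [E|E]; [|exfalso; apply Hk; ring].
        left. apply functional_extensionality; intro t.
        apply (f_equal (fun f => f t)) in E. unfold zs_sub, zs_scal, zs_zero in E. change (2 ^ Z.of_nat 0)%Z with 1%Z in E. lia.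
    - rewrite Nat.iter_succ. set (y := Nat.iter n (bary_scheme d a) x) in *.
      set (c := (2 ^ Z.of_nat n)%Z) in *.
      destruct (fs_pre a i 2 ltac:(lia) (ex_intro _ La HLa)) as [Lw HL].
      destruct (mp_fs a La HLa n) as [Ln HLn].
      set (w := fun j => a (zs_sub i (zs_scal 2 j))).
      set (A := fun j k => mask_pow a n (zs_sub j (zs_scal c k))).
      assert (HA : forall j k, A j k <> 0 -> In k (pre_list Ln j c)).
      { intros j k; apply (pre_list_ok (mask_pow a n)); auto. apply Hc. }
      eapply Rle_trans. apply (bary_jensen d a y i z Hh Ha).
      eapply Rle_trans.
      { apply (zsum_le _ (fun j => w j * zsum (fun k => A j k * d (x k) z)) Lw).
        - apply supp_mul; auto.
        - apply supp_mul; auto.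
        - intro j. apply Rmult_le_compat_l. apply Hnn. apply IHn. }
      rewrite (zsum_ext _ (fun j => zsum (fun k => w j * (A j k * d (x k) z)))).
      2:{ intro j. apply zsum_scal. exists (pre_list Ln j c). apply supp_mul. intro k; apply HA. }
      rewrite (zsum_fubini _ Lw (flat_map (fun j => pre_list Ln j c) Lw)).
      2:{ intros j k Hjk. assert (Hw : w j <> 0) by (intro E; apply Hjk; rewrite E; ring).
          assert (HAk : A j k <> 0) by (intro E; apply Hjk; rewrite E; ring).
          split; auto. apply in_flat_map. exists j; split; auto. }
      apply Req_le. apply zsum_ext. intro k.
      rewrite (zsum_ext _ (fun j => d (x k) z * (w j * A j k))) by (intro; ring).
      rewrite <- zsum_scal by (exists Lw; apply supp_mul; auto).
      rewrite Rmult_comm. f_equal.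
      change (mask_pow a (S n) ?m) with (zsum (fun j => a (zs_sub m (zs_scal 2 j)) * mask_pow a n j)).
      symmetry.
      rewrite <- (zsum_bij _ (fun j => zs_sub j (zs_scal c k)) (fun j => fun t => (j t + c * k t)%Z)).
      + apply zsum_ext. intro j. unfold w, A. f_equal. f_equal.
        apply functional_extensionality; intro t. unfold zs_sub, zs_scal.
        rewrite Nat2Z.inj_succ, Z.pow_succ_r by lia. fold c. ring.
      + intro j; apply functional_extensionality; intro t; unfold zs_sub, zs_scal; ring.
      + intro j; apply functional_extensionality; intro t; unfold zs_sub, zs_scal; ring.
      + exists Ln. apply supp_mul_r; auto. }
  split; [apply C1|].
  intros i j.
  destruct (mp_fs a La HLa n) as [Ln HLn].
  set (c := (2 ^ Z.of_nat n)%Z) in *.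
  assert (HA : forall i k, mask_pow a n (zs_sub i (zs_scal c k)) <> 0 -> In k (pre_list Ln i c))
    by (intros i' k; apply (pre_list_ok (mask_pow a n)); auto; apply Hc).
  eapply Rle_trans. apply (C1 n i).
  fold c.
  eapply Rle_trans.
  { apply (zsum_le _ (fun k => mask_pow a n (zs_sub i (zs_scal c k)) * zsum (fun l => mask_pow a n (zs_sub j (zs_scal c l)) * d (x k) (x l))) (pre_list Ln i c)).
    - apply supp_mul; auto.
    - apply supp_mul; auto.
    - intro k. apply Rmult_le_compat_l. apply mp_nonneg; auto. rewrite Hsym. eapply Rle_trans. apply C1. fold c.
      apply Req_le, zsum_ext. intro l. rewrite Hsym; auto. }
  apply Req_le, zsum_ext. intro k. rewrite zsum_scal. apply zsum_ext; intro; ring.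
  exists (pre_list Ln j c). apply supp_mul. intro; apply HA.
Qed.
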